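(* Let $q$ be an odd prime with $q \neq 5$, and let $k$ be an integer with $2 \leq k \leq 31$ such that $p = kq+1$ is prime and $z(p) \mid \pi(q)$. Then $k = 2$; that is, $p = 2q+1$ and $q$ is a Sophie Germain prime.
   Context: $F_n$ denotes the $n$-th Fibonacci number ($F_0 = 0$, $F_1 = 1$). For a prime $p$, $z(p)$ (rank of apparition) is the least positive integer $k$ with $p \mid F_k$. $\pi(n)$ is the Pisano period, the least period of $(F_m \bmod n)_{m\ge0}$. A Sophie Germain prime is a prime $q$ with $2q+1$ prime. *)

(* Defs.v *)
From mathcomp Require Import all_boot.
Set Implicit Arguments. Unset Strict Implicit. Unset Printing Implicit Defensive.

Fixpoint fibp (n : nat) : nat * nat :=
  match n with
  | 0 => (0, 1)
  | n'.+1 => let (a, b) := fibp n' in (b, a + b)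
  end.
Definition fib (n : nat) : nat := (fibp n).1.

Definition is_rank_app (p k : nat) : Prop :=
  0 < k /\ p %| fib k /\ (forall j, 0 < j -> p %| fib j -> k <= j).

Definition is_period (n m : nat) : Prop :=
  forall i, fib (i + m) %% n = fib i %% n.
Definition is_pisano (n m : nat) : Prop :=
  0 < m /\ is_period n m /\ (forall m', 0 < m' -> is_period n m' -> m <= m').

(* Main.v *)
Require Import Defs.
From Stdlib Require Import NArith.
From mathcomp Require Import all_boot all_algebra.
From mathcomp Require Import ring zify.
Set Warnings "-abstract-large-number".
Set Implicit Arguments. Unset Strict Implicit. Unset Printing Implicit Defensive.
Import GRing.Theory.

Fixpoint fibpN (n : nat) : N * N :=
  match n with
  | 0 => (N0, Npos xH)
  | n'.+1 => let (a, b) := fibpN n' in (b, N.add a b)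
  end.

Lemma fibpN_ok n : fibpN n = (N.of_nat (fibp n).1, N.of_nat (fibp n).2).
Proof.
elim: n => [//|n /=]; case: (fibp n) => a b /=; case: (fibpN n) => c d [-> ->].
by rewrite Nat2N.inj_add.
Qed.

Definition facs (D : nat) : seq nat :=
  match D with
  | 4 => [:: 3] | 6 => [:: 2;2;2] | 8 => [:: 3;7] | 10 => [:: 5;11]
  | 12 => [:: 2;2;2;2;3;3] | 14 => [:: 13;29] | 16 => [:: 3;7;47]
  | 18 => [:: 2;2;2;17;19] | 20 => [:: 3;5;11;41] | 22 => [:: 89;199]
  | 24 => [:: 2;2;2;2;2;3;3;7;23] | 26 => [:: 233;521] | 28 => [:: 3;13;29;281]
  | 30 => [:: 2;2;2;5;11;31;61] | 32 => [:: 3;7;47;2207]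
  | 36 => [:: 2;2;2;2;3;3;3;17;19;107] | 40 => [:: 3;5;7;11;41;2161]
  | 44 => [:: 3;43;89;199;307] | 48 => [:: 2;2;2;2;2;2;3;3;7;23;47;1103]
  | 52 => [:: 3;233;521;90481] | 56 => [:: 3;7;7;13;29;281;14503]
  | _ => [::]
  end.

Definition ks := [:: 4;6;8;10;12;14;16;18;20;22;24;26;28;30].
Definition Dsof k := [:: k; k.+2; (k - 2).*2].

Definition goodD D :=
  (fibpN D).1 == foldr N.mul (Npos xH) (map N.of_nat (facs D)).

Definition check :=
  all (fun k => all (fun D => goodD D && all prime (facs D) &&
     all (fun f => ~~ [&& k %| f.-1, prime (f.-1 %/ k) & odd (f.-1 %/ k)]) (facs D))
     (Dsof k)) ks.

Lemma check_ok : check. Proof. by vm_compute. Qed.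

Lemma prod_of_nat l : N.of_nat (foldr muln 1 l) = foldr N.mul (Npos xH) (map N.of_nat l).
Proof. by elim: l => //= a l <-; rewrite Nat2N.inj_mul. Qed.

Lemma dvd_prod p l : prime p -> p %| foldr muln 1 l -> exists2 f, f \in l & p %| f.
Proof.
move=> pp; elim: l => [|a l IH] /=; first by rewrite dvdn1 => /eqP e; rewrite e in pp.
rewrite Euclid_dvdM // => /orP [h|/IH [f fl pf]]; first by exists a; rewrite ?mem_head.
by exists f => //; rewrite in_cons fl orbT.
Qed.


Lemma comp_check k D q : k \in ks -> D \in Dsof k -> prime (k * q + 1) -> prime q -> odd q ->
  k * q + 1 %| fib D -> False.
Proof.
move=> kk kD pp pq oq dv.
have := check_ok; rewrite /check => /allP /(_ _ kk) /allP /(_ _ kD) /andP [/andP [gD pf] nb].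
have eD : fib D = foldr muln 1 (facs D).
  apply: Nat2N.inj; rewrite prod_of_nat -(eqP gD) fibpN_ok. done.
rewrite eD in dv; have [f fin pdf] := @dvd_prod _ _ pp dv.
have fp := allP pf _ fin.
move: pdf; rewrite dvdn_prime2 // => /eqP ef.
have k0 : 0 < k by have /allP := (erefl true : all (fun k => 0 < k) ks = true); apply.
by have := allP nb _ fin; rewrite -ef addn1 /= mulKn ?pq ?oq ?dvdn_mulr.
Qed.

Local Open Scope ring_scope.

Lemma fibSS n : fib n.+2 = (fib n.+1 + fib n)%N.
Proof. by rewrite /fib /=; case: (fibp n) => a b /=; rewrite addnC. Qed.

Section Mx.
Variable R : comNzRingType.
Definition fr n : R := (fib n)%:R.
Definition mk (a b c d : R) : 'M[R]_2 :=
  \matrix_(i, j) if (i : nat) == 0%N then (if (j : nat) == 0%N then a else b)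
                 else (if (j : nat) == 0%N then c else d).
Definition Qm := mk 1 1 1 0.
Definition Sc c := mk c 0 0 c.

Lemma frSS n : fr n.+2 = fr n.+1 + fr n.
Proof. by rewrite /fr fibSS natrD. Qed.

Lemma mkM a b c d a' b' c' d' : mk a b c d * mk a' b' c' d' =
  mk (a*a'+b*c') (a*b'+b*d') (c*a'+d*c') (c*b'+d*d').
Proof.
apply/matrixP => i j; rewrite !mxE big_ord_recl big_ord1 !mxE /=.
by case: i => [[|[|//]] ?]; case: j => [[|[|//]] ?].
Qed.

Lemma mkD a b c d a' b' c' d' : mk a b c d + mk a' b' c' d' =
  mk (a+a') (b+b') (c+c') (d+d').
Proof.
apply/matrixP => i j; rewrite !mxE.
by case: i => [[|[|//]] ?]; case: j => [[|[|//]] ?].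
Qed.

Lemma mkN a b c d : - mk a b c d = mk (-a) (-b) (-c) (-d).
Proof.
apply/matrixP => i j; rewrite !mxE.
by case: i => [[|[|//]] ?]; case: j => [[|[|//]] ?].
Qed.

Lemma mk1 : 1 = Sc 1 :> 'M[R]_2.
Proof.
apply/matrixP => i j; rewrite !mxE.
by case: i => [[|[|//]] ?]; case: j => [[|[|//]] ?].
Qed.

Lemma mkP a b c d a' b' c' d' : mk a b c d = mk a' b' c' d' ->
  [/\ a = a', b = b', c = c' & d = d'].
Proof.
move/matrixP => h; split.
- by move: (h ord0 ord0); rewrite !mxE.
- by move: (h ord0 ord_max); rewrite !mxE.
- by move: (h ord_max ord0); rewrite !mxE.
- by move: (h ord_max ord_max); rewrite !mxE.
Qed.

Lemma QmE n : Qm ^+ n.+1 = mk (fr n.+2) (fr n.+1) (fr n.+1) (fr n).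
Proof.
elim: n => [|n IH]; first by rewrite expr1 /fr /fib /=.
rewrite exprS IH /Qm mkM !frSS.
congr mk; ring.
Qed.

Lemma QmE' n : (0 < n)%N -> Qm ^+ n = mk (fr n.+1) (fr n) (fr n) (fr n.-1).
Proof. by case: n => // n _; rewrite QmE. Qed.

Lemma ScX c n : Sc c ^+ n = Sc (c ^+ n).
Proof.
elim: n => [|n IH]; first by rewrite !expr0 mk1.
by rewrite exprS IH /Sc mkM exprS; congr mk; ring.
Qed.

Lemma Sc_comm c A : GRing.comm (Sc c) A.
Proof.
have -> : A = mk (A ord0 ord0) (A ord0 ord_max) (A ord_max ord0) (A ord_max ord_max).
  apply/matrixP => i j; rewrite !mxE.
  by case: i => [[|[|//]] ?]; case: j => [[|[|//]] ?]; congr (A _ _); apply: val_inj.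
by rewrite /GRing.comm /Sc !mkM; congr mk; ring.
Qed.

Lemma fr_cons n : fr n.+1 = 0 -> fr n = 0 -> (1 : R) = 0.
Proof.
elim: n => [|n IH]; first by rewrite /fr /fib /=.
by move=> h1 h2; apply: IH => //; move: h1; rewrite frSS h2 add0r.
Qed.

End Mx.

Local Close Scope ring_scope.
Local Open Scope ring_scope.

Section Frob.
Variable r : nat.
Hypothesis pr : prime r.
Local Notation F := ('F_r).

Lemma charF : r \in [pchar F]. Proof. exact: pchar_Fp. Qed.
Lemma charM : r \in [pchar 'M[F]_2]. Proof. by rewrite pchar_lalg charF. Qed.


Lemma frobF (x y : F) : (x + y) ^+ r = x ^+ r + y ^+ r.
Proof.
have h : GRing.comm x y by rewrite /GRing.comm mulrC.
by have := pFrobenius_autD_comm charF h; rewrite !pFrobenius_autE.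
Qed.

Lemma fermatF n : (n%:R : F) ^+ r = n%:R.
Proof.
elim: n => [|n IH]; first by rewrite expr0n; case: r pr.
by rewrite -natr1 frobF IH expr1n.
Qed.

Lemma natF_neq0 n : prime n -> n != r -> (n%:R : F) != 0.
Proof.
move=> pn nr; rewrite -(dvdn_pcharf charF) dvdn_prime2 //.
by rewrite eq_sym.
Qed.

Lemma frob_fib : odd r -> r != 5%N ->
  (fr F r.-1 = 0 /\ fr F r = 1) \/ (fr F r.+1 = 0 /\ fr F r = -1).
Proof.
move=> or r5.
have [h er] : exists h, r = (h.*2).+1.
  by exists r./2; rewrite -{1}(odd_double_half r) or.
have n2 : (2%:R : F) != 0 by apply: natF_neq0 => //; apply/eqP => e; rewrite -e in or.
have n5 : (5%:R : F) != 0 by apply: natF_neq0; rewrite // eq_sym.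
pose S := mk (1 : F) 2%:R 2%:R (-1).
pose e := (5%:R : F) ^+ h.
have e1 : e ^+ 2 = 1.
  rewrite /e -exprM muln2; apply: (mulIf n5).
  by rewrite -exprSr -er fermatF mul1r.
have hT : Qm F * Sc 2%:R = 1 + S.
  by rewrite mk1 /Qm /Sc /S mkM mkD; congr mk; ring.
have hS : S ^+ r = Sc e * S.
  have -> : S ^+ r = S ^+ (h.*2).+1 by congr (_ ^+ _).
  rewrite exprSr -mul2n exprM.
  have -> : S ^+ 2 = Sc 5%:R by rewrite expr2 /S /Sc mkM; congr mk; ring.
  by rewrite ScX.
have h1 : (1 + S) ^+ r = 1 + S ^+ r.
  have c : GRing.comm (1 : 'M[F]_2) S by exact: commr_sym (commr1 S).
  by have := pFrobenius_autD_comm charM c; rewrite !pFrobenius_autE expr1n.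
have key : Qm F ^+ r * Sc (2%:R ^+ r) = 1 + Sc e * S.
  by rewrite -ScX -exprMn_comm ?hT ?h1 ?hS //; apply: commr_sym; exact: Sc_comm.
move: key; rewrite fermatF QmE' ?prime_gt0 // mk1 /S /Sc !mkM mkD.
move=> /mkP [ea eb _ ed].
have : (e == 1) || (e == -1) by rewrite -sqrf_eq1 e1.
case/orP => /eqP ee; rewrite ee !(mulr0, mul0r, mul1r, mulr1, add0r, addr0, mulN1r) in ea eb ed.
- left; split; apply: (mulIf n2); first by rewrite ed subrr mul0r.
  by rewrite eb mul1r.
- right; split; apply: (mulIf n2); first by rewrite ea subrr mul0r.
  by rewrite eb mulN1r.
Qed.
End Frob.

Local Close Scope ring_scope.
Local Open Scope ring_scope.

Section Per.
Variable q : nat.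
Hypothesis pq : prime q.
Local Notation F := ('F_q).

Lemma modF m n : (m %% q == n %% q)%N = ((m%:R : F) == n%:R).
Proof.
wlog le : m n / (n <= m)%N.
  move=> W; case/orP: (leq_total n m) => h; first exact: W.
  by rewrite eq_sym W // eq_sym.
by rewrite eqn_mod_dvd // (dvdn_pcharf (pchar_Fp pq)) natrB // subr_eq0.
Qed.

Lemma period_mx m : (0 < m)%N -> is_period q m -> Qm F ^+ m = 1.
Proof.
move=> m0 P.
have E i : fr F (i + m) = fr F i by apply/eqP; rewrite -modF; apply/eqP/P.
have h0 := E 0%N; have h1 := E 1%N; rewrite add0n in h0; rewrite add1n in h1.
have hS : fr F m.+1 = fr F m + fr F m.-1 by rewrite -[m in fr F m.+1](prednK m0) frSS prednK.
have hm1 : fr F m.-1 = 1 by move: h1; rewrite hS h0 add0r.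
by rewrite QmE' // mk1 h1 h0 hm1.
Qed.

Lemma mx_period m : Qm F ^+ m = 1 -> is_period q m.
Proof.
move=> E i; apply/eqP; rewrite modF; apply/eqP.
have : Qm F ^+ (i + m).+1 = Qm F ^+ i.+1 by rewrite -addSn exprD E mulr1.
by rewrite !QmE => /mkP [_ _ _].
Qed.

Lemma pisano_dvd pi A : is_pisano q pi -> (0 < A)%N -> Qm F ^+ A = 1 -> (pi %| A)%N.
Proof.
case=> p0 [Pp Pmin] A0 EA.
have Ep := period_mx p0 Pp.
have E : Qm F ^+ (A %% pi) = 1.
  move: EA; rewrite {1}(divn_eq A pi) exprD [(_ %/ _ * _)%N]mulnC exprM Ep expr1n mul1r.
  done.
apply/negPn/negP => nz.
have := Pmin _ _ (mx_period E); rewrite lt0n nz => /(_ isT).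
by rewrite leqNgt ltn_pmod.
Qed.

End Per.

Section Rank.
Variable p : nat.
Hypothesis pp : prime p.
Local Notation F := ('F_p).

Lemma fr0 n : (fr F n == 0) = (p %| fib n)%N.
Proof. by rewrite (dvdn_pcharf (pchar_Fp pp)). Qed.

Lemma rank_scalar z : is_rank_app p z -> exists2 c : F, c != 0 & Qm F ^+ z = Sc c.
Proof.
case=> z0 [dz _].
have hz : fr F z = 0 by apply/eqP; rewrite fr0.
exists (fr F z.-1).
  apply/eqP => c0.
  have := @fr_cons F z.-1; rewrite prednK // => /(_ hz c0) /eqP.
  by rewrite oner_eq0.
have hS : fr F z.+1 = fr F z + fr F z.-1 by rewrite -[z in fr F z.+1](prednK z0) frSS prednK.
by rewrite QmE' // /Sc hS hz add0r.
Qed.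

Lemma rank_dvd z n : is_rank_app p z -> (p %| fib n)%N -> (z %| n)%N.
Proof.
move=> Z dn; have [c c0 Ez] := rank_scalar Z; case: Z => z0 [_ Zmin].
case: n dn => [|n] dn; first by rewrite dvdn0.
apply/negPn/negP => bnz.
have b0 : (0 < n.+1 %% z)%N by rewrite lt0n.
have E : Qm F ^+ n.+1 = Sc (c ^+ (n.+1 %/ z)) * Qm F ^+ (n.+1 %% z).
  by rewrite {1}(divn_eq n.+1 z) exprD [(_ %/ _ * _)%N]mulnC exprM Ez ScX.
move: E; rewrite QmE' // QmE' // /Sc mkM => /mkP [_ eb _ _].
move: eb; rewrite mul0r addr0.
have -> : fr F n.+1 = 0 by apply/eqP; rewrite fr0.
move/esym/eqP; rewrite mulf_eq0 expf_eq0 (negbTE c0) andbF /= fr0 => h.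
by have := Zmin _ b0 h; rewrite leqNgt ltn_pmod.
Qed.

Lemma dvd_rank z n : is_rank_app p z -> (z %| n)%N -> (p %| fib n)%N.
Proof.
move=> Z /dvdnP [a ->]; have [c _ Ez] := rank_scalar Z; case: Z => z0 _.
case: a => [|a]; first by rewrite mul0n dvdn0.
have : Qm F ^+ (a.+1 * z) = Sc (c ^+ a.+1) by rewrite mulnC exprM Ez ScX.
by rewrite QmE' ?muln_gt0 // => /mkP [_ h _ _]; rewrite -fr0 h.
Qed.

End Rank.

Local Close Scope ring_scope.
Local Open Scope ring_scope.

Lemma frP (R : comNzRingType) n : (1 < n)%N -> fr R n = fr R n.-1 + fr R n.-2.
Proof. by case: n => [|[|n]] // _; rewrite frSS. Qed.

Lemma period_cases q pi : prime q -> odd q -> (q != 5)%N -> is_pisano q pi ->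
  ((pi %| q.-1) || (pi %| (q.+1).*2))%N.
Proof.
move=> pq oq q5 P.
have q3 : (2 < q)%N.
  have := prime_gt1 pq; rewrite leq_eqVlt => /orP [/eqP e|//].
  by rewrite -e in oq.
case: (frob_fib pq oq q5) => [[h1 h2]|[h1 h2]].
- have q1 : (0 < q.-1)%N by rewrite -subn1 subn_gt0 ltnW.
  apply/orP; left; apply: (pisano_dvd pq P) => //.
  rewrite QmE' // mk1.
  have h3 : fr 'F_q q.-2 = 1.
    by move: h2; rewrite frP ?h1 ?add0r // ltnW.
  by rewrite prednK ?h1 ?h2 ?h3 // prime_gt0.
- apply/orP; right; apply: (pisano_dvd pq P) => //.
  have E : Qm 'F_q ^+ q.+1 = Sc (-1).
    by rewrite QmE frSS h1 h2 add0r.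
  by rewrite -muln2 exprM E ScX expr2 mulN1r opprK -mk1.
Qed.

Lemma rank_cases p z : prime p -> odd p -> (p != 5)%N -> is_rank_app p z ->
  ((z %| p.-1) || (z %| p.+1))%N.
Proof.
move=> pp op p5 Z.
case: (frob_fib pp op p5) => [[h1 _]|[h1 _]]; apply/orP; [left|right];
  apply: (rank_dvd pp Z); by rewrite -fr0 // h1.
Qed.

Local Close Scope ring_scope.
Lemma ks_ok k : 2 <= k <= 31 -> ~~ odd k -> k != 2 -> k \in ks.
Proof.
move=> /andP [h2 h31] ko kn.
have H : all (fun k => (2 <= k <= 31) ==> ~~ odd k ==> (k != 2) ==> (k \in ks)) (iota 0 32)
  by [].
have := allP H k; rewrite mem_iota add0n ltnS h31 h2 ko kn /=.
by apply.
Qed.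

Theorem theorem4p2 (q k : nat) :
  prime q -> odd q -> q != 5 ->
  2 <= k <= 31 ->
  prime (k * q + 1) ->
  (exists z pi, is_rank_app (k * q + 1) z /\ is_pisano q pi /\ z %| pi) ->
  k = 2 /\ k * q + 1 = 2 * q + 1 /\ prime q /\ prime (2 * q + 1).
Proof.
move=> pq oq q5 hk pp [z [pi [Z [P zpi]]]].
suff k2 : k = 2 by subst k.
have q3 : 2 < q.
  have := prime_gt1 pq; rewrite leq_eqVlt => /orP [/eqP e|//].
  by rewrite -e in oq.
have k2 : 2 <= k by case/andP: hk.
have ko : ~~ odd k.
  case: (even_prime pp) => [e|].
    exfalso; move: e; nia.
  by rewrite addn1 /= oddM oq andbT.
apply/eqP; apply/negPn/negP => kn2.
have kk := ks_ok hk ko kn2.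
have k4 : 4 <= k by move: kk; rewrite /ks !inE; do ! case/orP => [/eqP -> //|]; move/eqP ->.
have op : odd (k * q + 1) by rewrite addn1 /= oddM (negbTE ko).
have p5 : k * q + 1 != 5 by apply/eqP; nia.
have Hp := rank_cases pp op p5 Z.
have Hq := period_cases pq oq q5 P.
rewrite addn1 /= in Hp.
have nqA : forall A, (pi %| A) -> 0 < A -> A < q \/ A = (q.+1).*2 -> z %| A -> coprime z q.
  move=> A _ A0 hA zA; rewrite coprime_sym prime_coprime //; apply/negP => qz.
  have qA := dvdn_trans qz zA.
  case: hA => [lt|eA].
    by have := dvdn_leq A0 qA; rewrite leqNgt lt.
  move: qA; rewrite eA -muln2 mulSn dvdn_addl ?dvdn_mulr // => /dvdn_leq.
  by move=> /(_ isT); rewrite leqNgt q3.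
have q1 : q.-1 < q by rewrite ltn_predL prime_gt0.
have q0 : 0 < q.-1 by rewrite -subn1 subn_gt0 ltnW.
have [D kD dD] : exists2 D, D \in Dsof k & z %| D.
  case/orP: Hq => hq; case/orP: Hp => hp.
  - exists k; first by rewrite /Dsof mem_head.
    have cz := nqA _ hq q0 (or_introl q1) (dvdn_trans zpi hq).
    by rewrite -(Gauss_dvdl k cz).
  - exists k.+2; first by rewrite /Dsof !inE eqxx orbT.
    have e : (k * q).+2 = k * q.-1 + k.+2.
      by rewrite -[in LHS](prednK (prime_gt0 pq)) mulnS; nia.
    by move: hp; rewrite e dvdn_addr // dvdn_mull // (dvdn_trans zpi hq).
  - exists k; first by rewrite /Dsof mem_head.
    have cz := nqA _ hq (double_gt0 _ : 0 < (q.+1).*2) (or_intror erefl) (dvdn_trans zpi hq).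
    by rewrite -(Gauss_dvdl k cz).
  - exists (k - 2).*2; first by rewrite /Dsof !inE eqxx !orbT.
    have e : k * (q.+1).*2 = ((k * q).+2).*2 + (k - 2).*2.
      rewrite -!mul2n; nia.
    have := dvdn_mull k (dvdn_trans zpi hq).
    by rewrite e dvdn_addr // -mul2n dvdn_mull.
exact: (@comp_check k D q kk kD pp pq oq (dvd_rank pp Z dD)).

Qed.
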